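(* Let $G$ be a graph, $\theta$ a real number, and let $u_1,\dots,u_k$ be distinct $\theta$-positive vertices of $G$. Then $\mathrm{mult}(\theta,G\setminus\{u_1,\dots,u_k\})$ is either equal to $\mathrm{mult}(\theta,G)+k$ or at most $\mathrm{mult}(\theta,G)+k-2$.
   Context: All graphs are finite and simple. For a graph $G$ on $n$ vertices, let $p(G,r)$ be the number of $r$-matchings of $G$ ($p(G,0)=1$); the matching polynomial is $\mu(G,x)=\sum_{r=0}^{\lfloor n/2\rfloor}(-1)^r p(G,r)x^{n-2r}$. For real $\theta$, $\mathrm{mult}(\theta,G)$ is the multiplicity of $\theta$ as a root of $\mu(G,x)$ (it is $0$ if $\theta$ is not a root). $G\setminus X$ denotes deletion of the vertex set $X$ and $G\setminus u=G\setminus\{u\}$. A vertex $u$ is $\theta$-positive in $G$ if $\mathrm{mult}(\theta,G\setminus u)=\mathrm{mult}(\theta,G)+1$. *)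

(* Defs.v *)
From HB Require Import structures.
From mathcomp Require Import all_boot all_order all_algebra.
Set Implicit Arguments. Unset Strict Implicit. Unset Printing Implicit Defensive.
Import Order.TTheory GRing.Theory Num.Theory.
Local Open Scope ring_scope.

(* A finite simple graph: vertex type T : finType with adjacency e : rel T,
   assumed symmetric and irreflexive in the theorem.  Induced subgraphs are
   represented by their vertex set S : {set T}; G itself is [set: T] and
   G \ X is ~: X. *)

Definition is_edge (T : finType) (e : rel T) (S : {set T}) (f : {set T}) : bool :=
  [exists x : T, exists y : T,
     [&& x \in S, y \in S, e x y & f == [set x; y]]].

Definition is_matching (T : finType) (e : rel T) (S : {set T})
    (M : {set {set T}}) : bool :=
  [forall f in M, is_edge e S f] &&
  [forall f in M, forall g in M, (f != g) ==> [disjoint f & g]].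

Definition nmatch (T : finType) (e : rel T) (S : {set T}) (r : nat) : nat :=
  #|[set M : {set {set T}} | is_matching e S M & #|M| == r]|.

Definition matchpoly (R : nzRingType) (T : finType) (e : rel T) (S : {set T})
    : {poly R} :=
  \sum_(r < (#|S| %/ 2).+1)
     ((-1) ^+ r * (nmatch e S r)%:R) *: 'X^(#|S| - 2 * r).

Definition mult (R : fieldType) (T : finType) (e : rel T) (theta : R)
    (S : {set T}) : nat :=
  mup theta (matchpoly R e S).

Definition theta_positive (R : fieldType) (T : finType) (e : rel T)
    (theta : R) (S : {set T}) (u : T) : bool :=
  mult e theta (S :\ u) == (mult e theta S).+1.

(* Main.v *)
Require Import Defs.
From HB Require Import structures.
From mathcomp Require Import all_boot all_order all_algebra.
From Stdlib Require Import Lia.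
Import Order.TTheory GRing.Theory Num.Theory.

Module Helpers.
Set Implicit Arguments. Unset Strict Implicit. Unset Printing Implicit Defensive.

Section Match.
Variables (T : finType) (e : rel T) (e_sym : symmetric e) (e_irr : irreflexive e).

Lemma is_edgeP (S : {set T}) f : reflect (exists x y, [/\ x \in S, y \in S, e x y & f = [set x; y]])
  (is_edge e S f).
Proof.
apply: (iffP idP).
  case/existsP=> x /existsP [y /and4P [xS yS exy /eqP ->]]; by exists x, y.
case=> x [y [xS yS exy ->]]; apply/existsP; exists x; apply/existsP; exists y.
by rewrite xS yS exy eqxx.
Qed.

Lemma is_edgeT f : reflect (exists x y, e x y /\ f = [set x; y]) (is_edge e setT f).
Proof.
apply: (iffP (is_edgeP _ _)).
  by case=> x [y [_ _ exy ->]]; exists x, y.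
by case=> x [y [exy ->]]; exists x, y; rewrite !in_setT.
Qed.

Lemma is_edge_sub (S : {set T}) f : is_edge e S f = is_edge e setT f && (f \subset S).
Proof.
apply/is_edgeP/andP.
  case=> x [y [xS yS exy ->]]; split; first by apply/is_edgeT; exists x, y.
  by rewrite subUset !sub1set xS yS.
case=> /is_edgeT [x [y [exy ->]]] sub; exists x, y; split => //.
  by apply: (subsetP sub); rewrite !inE eqxx.
by apply: (subsetP sub); rewrite !inE eqxx orbT.
Qed.

Definition Mt M := is_matching e setT M.

Lemma matchingE (S : {set T}) M : is_matching e S M = Mt M && (cover M \subset S).
Proof.
rewrite /Mt /is_matching.
have -> : [forall f in M, is_edge e S f] =
   [forall f in M, is_edge e setT f] && (cover M \subset S).
  apply/forall_inP/andP.
    move=> H; split; first by apply/forall_inP => f /H; rewrite is_edge_sub => /andP[].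
    by apply/bigcupsP => f /H; rewrite is_edge_sub => /andP[].
  case=> /forall_inP H /bigcupsP H2 f fM.
  by rewrite is_edge_sub H // H2.
by rewrite -!andbA; congr andb; rewrite andbC.
Qed.

Lemma Mt_pw M : Mt M -> {in M &, forall f g : {set T}, f != g -> [disjoint f & g]}.
Proof.
case/andP => _ /forall_inP H f g fM gM fg.
by have /forall_inP := H f fM => /(_ g gM) /implyP; apply.
Qed.

Lemma Mt_edge M f : Mt M -> f \in M -> exists x y, [/\ e x y, x != y & f = [set x; y]].
Proof.
case/andP => /forall_inP H _ /H /is_edgeT [x [y [exy ->]]].
exists x, y; split => //; apply: contraTneq exy => ->; by rewrite e_irr.
Qed.

Lemma card_cover M : Mt M -> #|cover M| = 2 * #|M|.
Proof.
move=> MM.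
have tr : trivIset M by apply/trivIsetP; exact: Mt_pw.
rewrite -(eqP tr) mulnC -sum_nat_const; apply: eq_bigr => f fM.
by have [x [y [_ xy ->]]] := Mt_edge MM fM; rewrite cards2 xy.
Qed.

Lemma Mt_sub M (M' : {set {set T}}) : Mt M -> M' \subset M -> Mt M'.
Proof.
case/andP => /forall_inP H1 /forall_inP H2 sub; apply/andP; split.
  by apply/forall_inP => f /(subsetP sub) /H1.
apply/forall_inP => f /(subsetP sub) fM; apply/forall_inP => g /(subsetP sub) gM.
by have /forall_inP := H2 f fM => /(_ g gM).
Qed.

Lemma Mt_add M f : Mt M -> is_edge e setT f -> [disjoint f & cover M] -> Mt (f |: M).
Proof.
move=> MM fe dis; apply/andP; split.
  apply/forall_inP => g; rewrite !inE => /orP [/eqP -> //|gM].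
  by case/andP: MM => /forall_inP H _; apply: H.
have key g : g \in M -> [disjoint f & g].
  move=> gM; apply: disjointWr dis; exact: bigcup_sup.
apply/forall_inP => g; rewrite !inE => gin; apply/forall_inP => h; rewrite !inE => hin.
apply/implyP.
case/orP: gin => [/eqP ->|gM]; case/orP: hin => [/eqP ->|hM].
- by rewrite eqxx.
- by move=> _; apply: key.
- by move=> _; rewrite disjoint_sym; apply: key.
- move=> gh; exact: (Mt_pw MM).
Qed.

Lemma match_le (S : {set T}) M : is_matching e S M -> 2 * #|M| <= #|S|.
Proof.
rewrite matchingE => /andP [MM sub]; rewrite -card_cover //; exact: subset_leq_card.
Qed.

End Match.
Local Open Scope ring_scope.

Section Poly.
Variables (T : finType) (e : rel T) (e_sym : symmetric e) (e_irr : irreflexive e).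
Variable R : rcfType.

Definition FM (S : {set T}) (M : {set {set T}}) : {poly R} :=
  (-1) ^+ #|M| *: 'X^(#|S| - 2 * #|M|).

Lemma matchpolyE (S : {set T}) :
  matchpoly R e S = \sum_(M | is_matching e S M) FM S M.
Proof.
rewrite /matchpoly.
transitivity (\sum_(r < (#|S| %/ 2).+1)
   \sum_(M | is_matching e S M && (#|M| == r)) FM S M).
  apply: eq_bigr => r _; rewrite /nmatch.
  have -> : #|[set M | is_matching e S M & #|M| == r]| =
     (\sum_(M | is_matching e S M && (#|M| == r)) 1)%N.
    by rewrite -sum1_card; apply: eq_bigl => M; rewrite inE.
  rewrite natr_sum mulr_sumr scaler_suml.
  apply: eq_bigr => M /andP [_ /eqP <-]; by rewrite mulr1.
rewrite (exchange_big_dep (fun M => is_matching e S M)) /=; last by move=> r M _ /andP[].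
apply: eq_bigr => M MM.
have lt : (#|M| < (#|S| %/ 2).+1)%N.
  by rewrite ltnS leq_divRL // mulnC; apply: match_le.
rewrite (big_pred1 (Ordinal lt)) // => r /=.
rewrite MM /=; apply/eqP/eqP => [H|->//]; by apply: val_inj.
Qed.


Lemma notin_M' (S : {set T}) v w M' : is_matching e (S :\ v :\ w) M' ->
  [set v; w] \notin M'.
Proof.
rewrite matchingE => /andP [_ sub]; apply/negP => fM.
have : v \in cover M' by apply/bigcupP; exists [set v; w]; rewrite // !inE eqxx.
by move/(subsetP sub); rewrite !inE eqxx andbF.
Qed.

Lemma pred_equiv (S : {set T}) v w M' : v \in S -> w \in S :\ v -> e v w ->
 ([&& is_matching e S ([set v; w] |: M') && (v \in cover ([set v; w] |: M')),
      w \in S :\ v, e v w & [set v; w] \in [set v; w] |: M'] &&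
   (([set v; w] |: M') :\ [set v; w] == M')) = is_matching e (S :\ v :\ w) M'.
Proof.
move=> vS wS evw; apply/idP/idP.
  case/andP => /and4P [/andP [MM _] _ _ _] /eqP HM.
  have fn : [set v; w] \notin M' by rewrite -HM setD11.
  move: MM; rewrite !matchingE => /andP [MM sub].
  apply/andP; split; first by rewrite -HM; apply: Mt_sub MM _; apply: subD1set.
  apply/bigcupsP => g gM; apply/subsetP => x xg.
  have gM2 : g \in [set v; w] |: M' by rewrite !inE gM orbT.
  have xS : x \in S.
    by apply: (subsetP sub); apply/bigcupP; exists g.
  have dis : [disjoint g & [set v; w]].
    apply: (Mt_pw MM) => //; first by rewrite !inE eqxx.
    by apply: contraNneq fn => <-.
  have := disjointFr dis xg; rewrite !inE => /negbT.
  by rewrite negb_or => /andP [xv xw]; rewrite xv xw xS.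
move=> MM.
have fn := notin_M' MM.
move: (MM); rewrite matchingE => /andP [MMt sub].
have wS' : w \in S by move: wS; rewrite inE => /andP[].
rewrite setU1K // eqxx andbT wS evw !inE eqxx /= andbT.
have cov : cover ([set v; w] |: M') = [set v; w] :|: cover M'.
  by rewrite /cover big_setU1.
rewrite cov !inE eqxx /= andbT matchingE cov; apply/andP; split.
  apply: Mt_add => //; first by apply/is_edgeT; exists v, w.
  rewrite disjoints_subset subUset !sub1set !inE.
  apply/andP; split; apply/negP => /(subsetP sub); rewrite !inE eqxx ?andbF //.
rewrite subUset subUset !sub1set vS wS' /=.
apply: subset_trans sub _; apply/subsetP => x; rewrite !inE => /andP [_ /andP[]] //.
Qed.

Lemma FM_add (S : {set T}) v w M' : v \in S -> w \in S :\ v ->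
  is_matching e (S :\ v :\ w) M' ->
  FM S ([set v; w] |: M') = - FM (S :\ v :\ w) M'.
Proof.
move=> vS wS MM.
have fn := notin_M' MM.
have le := match_le e_irr MM.
rewrite /FM cardsU1 fn add1n (cardsD1 v S) vS (cardsD1 w (S :\ v)) wS !add1n.
rewrite exprS mulN1r scaleNr; congr (- (_ *: 'X^_)).
by rewrite mulnS -addn2 addnC subnDl.
Qed.

Lemma one_term (S : {set T}) v M : is_matching e S M -> v \in cover M ->
  \sum_(w in S :\ v | e v w && ([set v; w] \in M)) FM S M = FM S M.
Proof.
move=> MM vc; move: (MM); rewrite matchingE => /andP [MMt sub].
case/bigcupP: (vc) => f fM vf.
have [w0 [fE evw wv]] : exists w0, [/\ f = [set v; w0], e v w0 & w0 != v].
  have [x [y [exy xy fE]]] := Mt_edge e_irr MMt fM.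
  move: vf; rewrite fE !inE => /orP [/eqP vx|/eqP vy].
    by exists y; rewrite vx; split => //; rewrite eq_sym.
  exists x; rewrite vy; split => //; [by apply/setP => z; rewrite !inE orbC | by rewrite e_sym].
have w0S : w0 \in S.
  by apply: (subsetP sub); apply/bigcupP; exists f; rewrite // fE !inE eqxx orbT.
rewrite (big_pred1 w0) // => w /=.
apply/idP/idP; last first.
  by move/eqP ->; rewrite !inE wv w0S evw -fE fM.
rewrite !inE => /and3P [/andP [wv' _] evw' fwM]; apply/eqP.
have ff : [set v; w] = f.
  apply/eqP; apply: contraT => ne.
  have := Mt_pw MMt fwM fM ne.
  by move/disjointFr => /(_ v); rewrite fE !inE eqxx /= => /(_ isT).
have : w \in f by rewrite -ff !inE eqxx orbT.
by rewrite fE !inE (negbTE wv') => /eqP.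
Qed.

Lemma mu_rec (S : {set T}) v : v \in S ->
  matchpoly R e S = 'X * matchpoly R e (S :\ v)
     - \sum_(w in S :\ v | e v w) matchpoly R e (S :\ v :\ w).
Proof.
move=> vS.
rewrite !matchpolyE (bigID (fun M => v \in cover M)) /= addrC.
congr (_ + _).
  rewrite mulr_sumr; apply: eq_big => M.
    by rewrite !matchingE subsetD1 andbA.
  move=> /andP [MM vn].
  have MMp : is_matching e (S :\ v) M.
    by move: MM; rewrite !matchingE subsetD1 => /andP [-> ->]; rewrite vn.
  rewrite /FM (cardsD1 v S) vS add1n subSn; last first.
    exact: (match_le e_irr MMp).
  by rewrite exprSr scalerAl mulrC.
transitivity (\sum_(M | is_matching e S M && (v \in cover M))
   \sum_(w in S :\ v | e v w && ([set v; w] \in M)) FM S M).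
  by apply: eq_bigr => M /andP [MM vc]; rewrite one_term.
rewrite (exchange_big_dep (fun w => (w \in S :\ v) && e v w)) /=; last first.
  by move=> M w _ /and3P [-> ->].
rewrite -sumrN; apply: eq_bigr => w /andP [wS evw].
rewrite matchpolyE -sumrN (reindex_onto (fun M' : {set {set T}} => [set v; w] |: M') (fun M : {set {set T}} => M :\ [set v; w])) /=; last first.
  by move=> M; rewrite !andbA => /andP [_ fM]; apply: setD1K.
apply: eq_big => M'.
  exact: pred_equiv.
by rewrite pred_equiv // => MM; apply: FM_add.
Qed.


Lemma mu_deriv (S : {set T}) :
  (matchpoly R e S)^`() = \sum_(v in S) matchpoly R e (S :\ v).
Proof.
transitivity (\sum_(v in S) \sum_(M | is_matching e S M && (v \notin cover M))
     FM (S :\ v) M); last first.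
  apply: eq_bigr => v vS; rewrite matchpolyE; apply: eq_bigl => M.
  by rewrite !matchingE subsetD1 andbA.
rewrite (exchange_big_dep (fun M => is_matching e S M)) /=; last by move=> v M _ /andP[].
rewrite matchpolyE raddf_sum; apply: eq_bigr => M MM.
transitivity (\sum_(v in S :\: cover M) ((-1) ^+ #|M| *: 'X^(#|S|.-1 - 2 * #|M|)
    : {poly R})); last first.
  apply: eq_big => v; first by rewrite !inE MM andbC.
  rewrite !inE => /andP [_ vS].
  by rewrite /FM (cardsD1 v S) vS add1n.
rewrite sumr_const cardsD.
move: (MM); rewrite matchingE => /andP [MMt sub].
rewrite (setIidPr sub) (card_cover e_irr MMt).
change ((FM S M)^`() = (-1) ^+ #|M| *: 'X^(#|S|.-1 - 2 * #|M|) *+ (#|S| - 2 * #|M|)); rewrite /FM derivZ derivXn -scalerMnr.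
by rewrite -!subn1 subnAC.
Qed.


Lemma nmatch0 (S : {set T}) : nmatch e S 0 = 1%N.
Proof.
rewrite /nmatch (_ : [set M | is_matching e S M & #|M| == 0%N] = [set set0]) ?cards1 //.
apply/eqP; rewrite eqEsubset; apply/andP; split; apply/subsetP => M; rewrite !inE cards_eq0.
  by case/andP.
move/eqP ->; rewrite eqxx andbT matchingE; apply/andP; split.
  by apply/andP; split; apply/forall_inP => f; rewrite inE.
by rewrite /cover big_set0 sub0set.
Qed.

Lemma mu_monic (S : {set T}) :
  matchpoly R e S \is monic /\ size (matchpoly R e S) = #|S|.+1.
Proof.
have [n] := ubnP #|S|; elim: n S => // n IH S lt.
case: (set_0Vmem S) => [->|[v vS]].
  rewrite /matchpoly cards0 /= big_ord1 nmatch0 /= expr0 mul1r scale1r.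
  by split; [apply: monic1 | rewrite size_polyC oner_neq0].
have ltv : (#|S :\ v| < n)%N.
  by move: lt; rewrite (cardsD1 v S) vS add1n ltnS.
have [m1 s1] := IH _ ltv.
have eS : #|S| = #|S :\ v|.+1 by rewrite (cardsD1 v S) vS.
have sz : (size (\sum_(w in S :\ v | e v w) matchpoly R e (S :\ v :\ w))%R <= #|S :\ v|)%N.
  apply: (big_ind (fun p : {poly R} => size p <= #|S :\ v|)%N) => //.
    by rewrite size_poly0.
    move=> p q Hp Hq; apply: leq_trans (size_polyD _ _) _; by rewrite geq_max Hp Hq.
  move=> w /andP [wS _].
  have ltw : (#|S :\ v :\ w| < n)%N.
    by move: ltv; rewrite (cardsD1 w (S :\ v)) wS add1n; apply: ltnW.
  have [_ ->] := IH _ ltw.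
  by rewrite (cardsD1 w (S :\ v)) wS.
have szX : size ('X * matchpoly R e (S :\ v)) = #|S|.+1.
  by rewrite mulrC size_mulX ?monic_neq0 // s1 eS.
rewrite (mu_rec vS); split.
  rewrite monicE lead_coefDl; last by rewrite size_polyN szX eS ltnS ltnW.
  by rewrite mulrC lead_coefMX.
by rewrite size_polyDl // size_polyN szX eS ltnS ltnW.
Qed.

Lemma mu_neq0 (S : {set T}) : matchpoly R e S != 0.
Proof. by have [m _] := mu_monic S; apply: monic_neq0. Qed.

End Poly.

Section Mult.
Variables (R : rcfType) (th : R).
Local Notation L := ('X - th%:P).

Definition sos (p : {poly R}) := exists s : seq {poly R}, p = \sum_(q <- s) q ^+ 2.

Lemma sos0 : sos 0.
Proof. by exists [::]; rewrite big_nil. Qed.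

Lemma sos_sq q : sos (q ^+ 2).
Proof. by exists [:: q]; rewrite big_seq1. Qed.

Lemma sos_add p q : sos p -> sos q -> sos (p + q).
Proof. by case=> s -> [t ->]; exists (s ++ t); rewrite big_cat. Qed.

Lemma sos_sum (I : finType) (P : pred I) (F : I -> {poly R}) :
  (forall i, P i -> sos (F i)) -> sos (\sum_(i | P i) F i).
Proof. move=> H; apply: big_ind => //; [exact: sos0 | exact: sos_add]. Qed.

Lemma mup_repr q : q != 0 -> exists g, q = g * L ^+ (mup th q) /\ ~~ root g th.
Proof.
move=> q0; have [m [g]] := multiplicity_XsubC q th.
rewrite q0 /= => ng qE; exists g; split => //.
by rewrite {2}qE mupMr // mup_XsubCX eqxx.
Qed.

Lemma mup_of g m : ~~ root g th -> mup th (L ^+ m * g) = m.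
Proof. by move=> ng; rewrite mupMl // mup_XsubCX eqxx. Qed.

Lemma hornerL_exp k : (L ^+ k).[th] = (k == 0)%:R.
Proof.
rewrite horner_exp hornerXsubC subrr; case: k => [|k]; first by rewrite expr0.
by rewrite expr0n.
Qed.

Lemma sos_struct (s : seq {poly R}) :
  all (fun q => q == 0) s \/
  exists d h, [/\ \sum_(q <- s) q ^+ 2 = L ^+ (2 * d) * h, 0 < h.[th] &
     forall q, q \in s -> q != 0 -> (d <= mup th q)%N].
Proof.
elim: s => [|q s IH]; first by left.
rewrite big_cons.
have [->|q0] := eqVneq q 0.
  rewrite expr0n /= add0r; case: IH => [H|[d [h [E hp B]]]]; first by left; rewrite /= eqxx.
  right; exists d, h; split => // q'; rewrite inE => /orP [/eqP ->|]; first by rewrite eqxx.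
  exact: B.
right; have [g [qE ng]] := mup_repr q0.
set m := mup th q in qE.
have gp : 0 < (g ^+ 2).[th] by rewrite horner_exp exprn_even_gt0 //.
have q2 : q ^+ 2 = L ^+ (2 * m) * g ^+ 2.
  by rewrite qE exprMn mulrC -exprM mulnC.
case: IH => [H|[d [h [E hp B]]]].
  exists m, (g ^+ 2); split => //.
    by rewrite big1_seq ?addr0 // => p /andP [_ /(allP H) /eqP ->]; rewrite expr0n.
  by move=> p; rewrite inE => /orP [/eqP ->|/(allP H) /eqP ->]; rewrite ?eqxx.
have [le|lt] := leqP m d.
  exists m, (g ^+ 2 + L ^+ (2 * (d - m)) * h); split.
  - rewrite q2 E mulrDr; congr (_ + _); rewrite mulrA -exprD.
    by rewrite -mulnDr subnKC.
  - rewrite hornerD (hornerM (L ^+ _)) hornerL_exp; apply: ltr_wpDr => //.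
    by apply: mulr_ge0; [case: (_ == _) | apply: ltW].
  - move=> p; rewrite inE => /orP [/eqP ->|pin p0] //.
    exact: leq_trans le (B _ pin p0).
exists d, (h + L ^+ (2 * (m - d)) * g ^+ 2); split.
- rewrite q2 E mulrDr addrC; congr (_ + _); rewrite mulrA -exprD.
  by rewrite -mulnDr subnKC // ltnW.
- rewrite hornerD (hornerM (L ^+ _)) hornerL_exp; apply: ltr_wpDr => //.
  by apply: mulr_ge0; [case: (_ == _) | apply: ltW].
- move=> p; rewrite inE => /orP [/eqP ->|pin p0]; last exact: B.
  by move=> _; apply: ltnW.
Qed.

Lemma sos_even p : sos p -> p != 0 -> ~~ odd (mup th p).
Proof.
case=> s ->; case: (sos_struct s) => [H|[d [h [-> hp _]]]].
  by rewrite big1_seq ?eqxx // => q /andP [_ /(allP H) /eqP ->]; rewrite expr0n.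
move=> _; rewrite mup_of; first by rewrite mul2n odd_double.
by rewrite /root gt_eqF.
Qed.

Lemma sos_sq_bound q p : sos p -> q != 0 ->
  q ^+ 2 + p != 0 /\ (mup th (q ^+ 2 + p) <= 2 * mup th q)%N.
Proof.
case=> s -> q0.
have -> : q ^+ 2 + \sum_(r <- s) r ^+ 2 = \sum_(r <- q :: s) r ^+ 2 by rewrite big_cons.
case: (sos_struct (q :: s)) => [/andP [/eqP q00 _]|[d [h [-> hp B]]]].
  by rewrite q00 eqxx in q0.
have hn : ~~ root h th by rewrite /root gt_eqF.
split.
  rewrite mulf_neq0 ?expf_neq0 ?polyXsubC_eq0 //.
  by apply: contraNneq hn => ->; rewrite root0.
rewrite mup_of // leq_mul2l /=; apply: B => //; by rewrite inE eqxx.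
Qed.

Lemma dvd_mup p : L ^+ (mup th p) %| p.
Proof.
have [->|p0] := eqVneq p 0; first exact: dvdp0.
by rewrite -mup_geq.
Qed.

Lemma mup_sub_exact p q k : q != 0 -> mup th q = k -> L ^+ k.+1 %| p ->
  p - q != 0 /\ mup th (p - q) = k.
Proof.
move=> q0 qk dp.
have nd : ~~ (L ^+ k.+1 %| q) by rewrite -mup_leq // qk.
have pq0 : p - q != 0.
  apply: contraNneq nd => /eqP; rewrite subr_eq0 => /eqP <-; exact: dp.
split => //; apply/eqP; rewrite eqn_leq mup_leq // mup_geq //.
apply/andP; split; last first.
  apply: dvdp_sub; last by rewrite -qk; apply: dvd_mup.
  by apply: dvdp_trans dp; apply: dvdp_exp2l.
apply: contra nd => H.
have -> : q = p - (p - q) by rewrite opprB addrC subrK.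
exact: dvdp_sub.
Qed.

Lemma dvd_deriv p n : L ^+ n.+1 %| p -> L ^+ n %| p^`().
Proof.
case/dvdpP => r ->; rewrite derivM deriv_exp derivXsubC mul1r /=.
apply: dvdp_add.
  by apply: dvdp_mull; rewrite exprS; apply: dvdp_mulIr.
by apply: dvdp_mull; rewrite -mulr_natr; apply: dvdp_mulr; apply: dvdpp.
Qed.

End Mult.

Lemma arith (a b : nat) : (b.+1 < a)%N -> (b + b.+1 <= a + b.-1)%N.
Proof. move=> /ssrnat.ltP H; apply/ssrnat.leP; rewrite -?plusE; lia. Qed.

Lemma arith2 (N y xu xv c : nat) :
  (xu = N.+1 \/ (xu + 2 <= N.+1)%N) -> (xv = N.+1 \/ (xv + 2 <= N.+1)%N) ->
  (c = N \/ (c + 2 <= N)%N) ->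
  (y <= xu + 1)%N -> (y <= xv + 1)%N -> (xu <= c + 1)%N ->
  (y = N.+2 \/ (y + 2 <= N.+2)%N) \/ [/\ c = N, xu = N.+1, xv = N.+1 & y = N.+1].
Proof.
move=> [H1|/ssrnat.leP H1] [H2|/ssrnat.leP H2] [H3|/ssrnat.leP H3] /ssrnat.leP H4 /ssrnat.leP H5 /ssrnat.leP H6;
 rewrite -?plusE in H1 H2 H3 H4 H5 H6 *;
 (case: (ltnP N.+1 y) => /ssrnat.leP Hy; [left; left | case: (ltnP N y) => /ssrnat.leP Hy2; [right; split | left; right; apply/ssrnat.leP]]); rewrite -?plusE; lia.
Qed.

Lemma setC_D1 (T : finType) (A : {set T}) x : x \in A -> ~: A = ~: (A :\ x) :\ x.
Proof.
move=> xA; apply/setP => z; rewrite !inE.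
by case: (eqVneq z x) => [->|]; rewrite ?xA.
Qed.

Lemma D1C (T : finType) (A : {set T}) x y : A :\ x :\ y = A :\ y :\ x.
Proof. by apply/setP => z; rewrite !inE andbCA. Qed.

Section Ident.
Variables (T : finType) (e : rel T) (e_sym : symmetric e) (e_irr : irreflexive e).
Variable R : rcfType.
Local Notation mu S := (matchpoly R e S).

Lemma alg1 (x a b A B : {poly R}) : (x * a - A) * b - (x * b - B) * a = B * a - A * b.
Proof.
rewrite !mulrBl mulrAC opprB addrC addrA; congr (_ - _).
by rewrite subrK.
Qed.

Lemma Dsos (S : {set T}) u v : u \in S -> v \in S -> u != v ->
  sos (mu (S :\ u) * mu (S :\ v) - mu S * mu (S :\ u :\ v)).
Proof.
have [n] := ubnP #|S|; elim: n S u v => // n IH S u v lt uS vS uv.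
have vSu : v \in S :\ u by rewrite !inE eq_sym uv vS.
rewrite (mu_rec e_sym e_irr R vS) (mu_rec e_sym e_irr R vSu) alg1 mulr_suml mulr_suml.
rewrite (bigID (pred1 u)) /= -addrA.
apply: sos_add.
  apply: sos_sum => w /andP [_ /eqP ->]; rewrite D1C; exact: sos_sq.
rewrite (eq_bigl (fun w => (w \in S :\ v) && e v w && (w != u)) (P1 := fun w => (w \in S :\ u :\ v) && e v w)); last first.
  move=> w /=; rewrite !inE; by case: (w != v); case: (w != u); case: (w \in S); case: (e v w).
rewrite -sumrB; apply: sos_sum => w /andP [/andP [wS _] wu].
have ltv : (#|S :\ v| < n)%N by move: lt; rewrite (cardsD1 v S) vS add1n ltnS.
have uSv : u \in S :\ v by rewrite !inE uv uS.
have := IH _ w u ltv wS uSv wu.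
have E2 : S :\ v :\ w :\ u = S :\ u :\ v :\ w.
  by apply/setP => z; rewrite !inE; case: (z != v); case: (z != u); case: (z != w).
by rewrite (D1C S v u) E2 (mulrC (mu (S :\ v))).
Qed.


Variable th : R.
Local Notation L := ('X - th%:P).
Local Notation mlt S := (mup th (mu S)).

Lemma W_form (S : {set T}) u : u \in S -> exists s, sos s /\
  mu (S :\ u) * (mu S)^`() - mu S * (mu (S :\ u))^`() = mu (S :\ u) ^+ 2 + s.
Proof.
move=> uS.
exists (\sum_(v in S :\ u) (mu (S :\ u) * mu (S :\ v) - mu S * mu (S :\ u :\ v))).
split.
  apply: sos_sum => v; rewrite !inE => /andP [vu vS].
  apply: Dsos => //; by rewrite eq_sym.
rewrite !(mu_deriv e_irr) (bigD1 u) //= mulrDr expr2 -addrA; congr (_ + _).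
rewrite sumrB mulr_sumr mulr_sumr; congr (_ - _).
by apply: eq_bigl => v; rewrite !inE andbC.
Qed.

Lemma inter2 (S : {set T}) u : u \in S -> (mlt S <= (mlt (S :\ u)).+1)%N.
Proof.
move=> uS; rewrite leqNgt; apply/negP => lt.
set a := mlt S in lt; set b := mlt (S :\ u) in lt.
have [s [ss W]] := W_form uS.
have [W0 Wle] := sos_sq_bound th ss (mu_neq0 e_sym e_irr R (S :\ u)).
rewrite -W in W0 Wle.
have : L ^+ (2 * b).+1 %| mu (S :\ u) * (mu S)^`() - mu S * (mu (S :\ u))^`().
  apply: dvdp_sub.
    have d1 : L ^+ (b + a.-1) %| mu (S :\ u) * (mu S)^`().
      rewrite exprD; apply: dvdp_mul; first exact: dvd_mup.
      apply: dvd_deriv; rewrite prednK; first exact: dvd_mup.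
      by apply: leq_ltn_trans lt.
    apply: dvdp_trans d1; apply: dvdp_exp2l.
    by rewrite mul2n -addnn -addnS leq_add2l -ltnS prednK //; apply: leq_ltn_trans lt.
  have d2 : L ^+ (a + b.-1) %| mu S * (mu (S :\ u))^`().
    rewrite exprD; apply: dvdp_mul; first exact: dvd_mup.
    case: (posnP b) => [b0|bp]; first by rewrite b0 expr0 dvd1p.
    apply: dvd_deriv; rewrite prednK //; exact: dvd_mup.
  apply: dvdp_trans d2; apply: dvdp_exp2l.
  rewrite mul2n -addnn -addSn addnC.
  exact: arith lt.
rewrite -mup_geq // => H.
by have := leq_trans H Wle; rewrite ltnn.
Qed.


Lemma inter1 (S : {set T}) u : u \in S -> (mlt (S :\ u) <= (mlt S).+1)%N.
Proof.
move=> uS.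
have : L ^+ (mlt (S :\ u)).-1 %| mu S.
  rewrite (mu_rec e_sym e_irr R uS); apply: dvdp_sub.
    apply: dvdp_mull; apply: dvdp_trans (dvd_mup _ _); apply: dvdp_exp2l.
    exact: leq_pred.
  apply: (big_ind (fun p : {poly R} => L ^+ (mlt (S :\ u)).-1 %| p)); first exact: dvdp0.
    by move=> p q; apply: dvdp_add.
  move=> w /andP [wS _]; apply: dvdp_trans (dvd_mup _ _); apply: dvdp_exp2l.
  by rewrite -subn1 leq_subLR addnC addn1; apply: inter2.
rewrite -mup_geq ?(mu_neq0 e_sym e_irr) // => H.
by rewrite -(leq_add2r 1) !addn1 in H *; apply: leq_trans (leqSpred _) _; rewrite -ltnS -[X in (_ < X)%N]addn1 addnC.
Qed.


Lemma main (U : {set T}) :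
  (forall u, u \in U -> mlt (setT :\ u) = (mlt setT).+1) ->
  forall W : {set T}, W \subset U ->
  mlt (~: W) = (mlt setT + #|W|)%N \/ (mlt (~: W) + 2 <= mlt setT + #|W|)%N.
Proof.
move=> pos W; have [n] := ubnP #|W|; elim: n W => // n IH W lt sub.
case: (set_0Vmem W) => [->|[u uW]].
  by left; rewrite setC0 cards0 addn0.
case: (set_0Vmem (W :\ u)) => [W1|[v vW1]].
  have WE : W = [set u] by rewrite -(setD1K uW) W1 setU0.
  left; rewrite WE cards1 addn1 -(pos u); last exact: (subsetP sub).
  by have -> : [set~ u] = [set: T] :\ u by apply/setP => z; rewrite !inE andbT.
have vW : v \in W by move: vW1; rewrite inE => /andP[].
have uv : u != v by move: vW1; rewrite !inE eq_sym => /andP[].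
have uWv : u \in W :\ v by rewrite !inE uv uW.
set W0 := W :\ u :\ v.
set H := ~: W0.
have uH : u \in H by rewrite !inE eqxx /= andbF.
have vH : v \in H by rewrite !inE eqxx.
have vHu : v \in H :\ u by rewrite in_setD1 eq_sym uv vH.
have uHv : u \in H :\ v by rewrite in_setD1 uv uH.
have E1 : ~: (W :\ u) = H :\ v by rewrite (setC_D1 vW1).
have E2 : ~: (W :\ v) = H :\ u by rewrite (setC_D1 uWv) D1C.
have E3 : ~: W = H :\ u :\ v by rewrite (setC_D1 uW) E1 D1C.
have cWu : #|W :\ u| = #|W0|.+1 by rewrite (cardsD1 v (W :\ u)) vW1.
have cWv : #|W :\ v| = #|W0|.+1 by rewrite (cardsD1 u (W :\ v)) uWv D1C.
have cW : #|W| = #|W0|.+2 by rewrite (cardsD1 u W) uW cWu.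
have lt1 : (#|W :\ u| < n)%N by move: lt; rewrite cW cWu ltnS.
have lt2 : (#|W :\ v| < n)%N by move: lt; rewrite cW cWv ltnS.
have lt0 : (#|W0| < n)%N by move: lt; rewrite cW ltnS; apply: ltnW.
have s1 : W :\ u \subset U by apply: subset_trans sub; apply: subD1set.
have s2 : W :\ v \subset U by apply: subset_trans sub; apply: subD1set.
have s0 : W0 \subset U by apply: subset_trans s1; apply: subD1set.
have := IH _ lt1 s1; rewrite E1 cWu addnS => hv.
have := IH _ lt2 s2; rewrite E2 cWv addnS => hu.
have := IH _ lt0 s0; rewrite -/H => hc.
have eN : (mlt setT + #|W0|.+2 = (mlt setT + #|W0|).+2)%N by rewrite !addnS.
rewrite E3 cW eN.
have i1 : (mlt (H :\ u :\ v) <= mlt (H :\ u) + 1)%N by rewrite addn1; apply: inter1.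
have i2 : (mlt (H :\ u :\ v) <= mlt (H :\ v) + 1)%N by rewrite addn1 D1C; apply: inter1.
have i3 : (mlt (H :\ u) <= mlt H + 1)%N by rewrite addn1; apply: inter1.
case: (arith2 hu hv hc i1 i2 i3) => [H1|[c xu xv y]]; first by case: H1 => H1; [left|right].
exfalso.
have := Dsos uH vH uv.
set N := (mlt setT + #|W0|)%N in c xu xv y.
have nz := mu_neq0 e_sym e_irr R.
have dv : L ^+ (mup th (mu H * mu (H :\ u :\ v))).+1 %| mu (H :\ u) * mu (H :\ v).
  rewrite mupM ?nz // c y.
  have -> : ((N + N.+1).+1 = N.+1 + N.+1)%N by rewrite addSn.
  rewrite exprD; apply: dvdp_mul.
    by rewrite -xu; apply: dvd_mup.
  by rewrite -xv; apply: dvd_mup.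
have [D0 Dm] := mup_sub_exact (mulf_neq0 (nz H) (nz (H :\ u :\ v))) (erefl _) dv.
move/(sos_even th) => /(_ D0); rewrite Dm mupM ?nz // c y addnS addnn /=.
by rewrite odd_double.
Qed.

End Ident.

End Helpers.

Theorem lemma3p12 (T : finType) (e : rel T) (e_sym : symmetric e)
  (e_irr : irreflexive e) (R : rcfType) (theta : R) (U : {set T}) :
  (forall u, u \in U -> theta_positive e theta [set: T] u) ->
  mult e theta (~: U) = (mult e theta [set: T] + #|U|)%N \/
  (mult e theta (~: U) + 2 <= mult e theta [set: T] + #|U|)%N.
Proof.
move=> pos.
apply: (Helpers.main e_sym e_irr (th := theta) (U := U)) => //.
by move=> u /pos /eqP.
Qed.
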